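(* Let $G=(V,E)$ be a graph with nonnegative edge lengths $l_e$, root $r$, and integer demands $d_v>0$ on a set of demand nodes, with total demand $D$. Fix $\epsilon>0$, $\gamma>1$, $\delta>1$, let $K=\lceil \log_{1+\epsilon} D\rceil$, $M_i=(1+\epsilon)^i$, $A_i(x)=\min\{x,M_i\}$, and let $T_i^*$ be an optimal routing tree for $A_i$ ($0\le i\le K$). Run the following procedure: (1) for each $i$ let $T_i$ be a routing tree returned by a deterministic $\lambda$-approximation algorithm for SSRoB with cost function $A_i$; (2) for $i=1,\dots,K$ in increasing order, if $A_i(T_{i-1})<A_i(T_i)$ set $T_i\leftarrow T_{i-1}$; (3) for $i=K-1,\dots,0$ in decreasing order, if $A_i(T_{i+1})<A_i(T_i)$ set $T_i\leftarrow T_{i+1}$; (4) compute the rent cost $R_i$ and normalized buy cost $B_i$ of each resulting $T_i$; (5) set $L_B=\emptyset$, $B=\infty$, and for $i=0,\dots,K$ in increasing order, if $B_i<B/\gamma$ then add $i$ to $L_B$ and set $B\leftarrow B_i$; (6) set $L=\emptyset$, $R=\infty$, and for each $i\in L_B$ in decreasing order, if $R_i<R/\delta$ then add $i$ to $L$ and set $R\leftarrow R_i$. Suppose there exist a routing tree $T$ and constants $c_B,c_R$ such that for every $i\in L$ there is a partition of the edges of $T$ into two sets $T_{B_i}$ and $T_{R_i}$ with $A_0(T_{B_i})\le c_B B_i$ and $A_K(T_{R_i})\le c_R R_i$. Then for all $k\in\{0,\dots,K\}$, $A_k(T)\le \max\{c_B\gamma,\,c_R\delta\}\,\lambda\, A_k(T_k^*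 )$.
   Context: A routing tree is a tree in $G$ containing $r$ and all demand nodes; each demand node $v$ sends $d_v$ units of flow to $r$ along its unique tree path, and $x_e$ denotes the total flow on edge $e$. For a function $f$ and a routing tree $T$, $f(T)=\sum_{e\in T} l_e f(x_e)$; for a subset $S$ of edges of $T$, $f(S)=\sum_{e\in S} l_e f(x_e)$ with $x_e$ the flows in $T$. The single-sink rent-or-buy (SSRoB) problem with parameter $M$ is to find a routing tree minimizing $A(T)$ for $A(x)=\min\{x,M\}$; a $\lambda$-approximation algorithm returns a routing tree of cost at most $\lambda$ times optimal. For a routing tree $T_i$ with flows $x_e$, its rent cost is $R_i=\sum_{e\in T_i,\,x_e<M_i} l_e A_i(x_e)$ and its normalized buy cost is $B_i=\sum_{e\in T_i,\,x_e\ge M_i} l_e$. *)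

(* Defs.v *)
From HB Require Import structures.
From mathcomp Require Import all_boot all_order all_algebra.
From mathcomp Require Import reals exp.
Set Implicit Arguments. Unset Strict Implicit. Unset Printing Implicit Defensive.
Import Order.TTheory GRing.Theory Num.Theory.
Local Open Scope ring_scope.

(* A routing tree containing the root r is encoded by its vertex set together
   with, for every non-root tree vertex v, the edge of the tree joining v to
   its parent (the next vertex on the unique tree path from v to r). *)
Section Routing.
Variables (R : realType) (V E : finType) (src tgt : E -> V) (l : E -> R)
          (r : V) (dem : {set V}) (d : V -> nat).

Definition rtree := ({set V} * (V -> E))%type.

Definition par (T : rtree) (v : V) : V :=
  if v == r then r
  else let e := T.2 v in if src e == v then tgt e else src e.

Definition is_routing_tree (T : rtree) : Prop :=
  [/\ r \in T.1, dem \subset T.1,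
      (forall v, v \in T.1 -> v != r -> (src (T.2 v) == v) || (tgt (T.2 v) == v)),
      (forall v, v \in T.1 -> par T v \in T.1)
    & (forall v, v \in T.1 -> iter #|V| (par T) v = r)].

Definition tree_edges (T : rtree) : {set E} := [set T.2 v | v in [set v in T.1 | v != r]].

Definition on_path (T : rtree) (w v : V) : bool :=
  [exists k : 'I_#|V|.+1, iter k (par T) w == v].

(* flow on the tree edge (pe v) joining v to its parent *)
Definition flow (T : rtree) (v : V) : R :=
  (\sum_(w in dem | on_path T w v) d w)%:R.

Definition cost (f : R -> R) (T : rtree) : R :=
  \sum_(v in T.1 | v != r) l (T.2 v) * f (flow T v).

Definition costS (f : R -> R) (T : rtree) (S : {set E}) : R :=
  \sum_(v in T.1 | (v != r) && (T.2 v \in S)) l (T.2 v) * f (flow T v).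

Variable eps : R.
Definition Mi (i : nat) : R := (1 + eps) ^+ i.
Definition Ai (i : nat) (x : R) : R := Num.min x (Mi i).

Definition rent (i : nat) (T : rtree) : R :=
  \sum_(v in T.1 | (v != r) && (flow T v < Mi i)) l (T.2 v) * Ai i (flow T v).
Definition buy (i : nat) (T : rtree) : R :=
  \sum_(v in T.1 | (v != r) && (Mi i <= flow T v)) l (T.2 v).

Variables (K : nat) (T0 : nat -> rtree) (gam del : R).

Fixpoint fwd (i : nat) : rtree :=
  match i with
  | 0 => T0 0
  | i'.+1 => if cost (Ai i) (fwd i') < cost (Ai i) (T0 i) then fwd i' else T0 i
  end.

(* step (3): backward pass; bwd n is the tree at index K - n *)
Fixpoint bwd (n : nat) : rtree :=
  match n with
  | 0 => fwd K
  | n'.+1 => let i := (K - n)%N in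
             if cost (Ai i) (bwd n') < cost (Ai i) (fwd i) then bwd n' else fwd i
  end.

Definition final (i : nat) : rtree := bwd (K - i).

(* None encodes +infinity *)
Definition lt_over (x : R) (c : R) (o : option R) : bool :=
  if o is Some y then x < y / c else true.

Definition LB_step (st : seq nat * option R) (i : nat) : seq nat * option R :=
  let Bi := buy i (final i) in
  if lt_over Bi gam st.2 then (rcons st.1 i, Some Bi) else st.
Definition LB : seq nat := (foldl LB_step ([::], None) (iota 0 K.+1)).1.

Definition L_step (st : seq nat * option R) (i : nat) : seq nat * option R :=
  let Ri := rent i (final i) in
  if lt_over Ri del st.2 then (rcons st.1 i, Some Ri) else st.
Definition L : seq nat := (foldl L_step ([::], None) (rev LB)).1.

End Routing.

Definition Kof (R : realType) (eps : R) (D : nat) : int :=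
  Num.ceil (ln (D%:R : R) / ln (1 + eps)).

(* Main.v *)
Require Import Defs.
From HB Require Import structures.
From mathcomp Require Import all_boot all_order all_algebra.
From mathcomp Require Import reals exp.
From mathcomp Require Import ring lra.
Import Order.TTheory GRing.Theory Num.Theory.
Local Open Scope ring_scope.

Lemma pairwise_rev_flip (T : Type) (ord : rel T) (s : seq T) :
  pairwise ord s -> pairwise (fun a b => ord b a) (rev s).
Proof.
elim: s => [|x s IH] //=; rewrite rev_cons pairwise_rcons all_rev.
by case/andP=> hx hs; rewrite hx IH.
Qed.

Section Fold.
Variable R : realType.
Definition gstep (f : nat -> R) (c : R) (st : seq nat * option R) (i : nat) :=
  if lt_over (f i) c st.2 then (rcons st.1 i, Some (f i)) else st.

Lemma fold_inv f c (hc : 1 <= c) (hf : forall i, 0 <= f i) (ord : rel nat) s :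
  pairwise ord s ->
  [/\ subseq (foldl (gstep f c) ([::], None) s).1 s,
      (foldl (gstep f c) ([::], None) s).2 = None -> s = [::],
      (forall v, (foldl (gstep f c) ([::], None) s).2 = Some v ->
          exists2 y, y \in (foldl (gstep f c) ([::], None) s).1 & v = f y) &
      (forall x, x \in s -> exists y, [/\ y \in (foldl (gstep f c) ([::], None) s).1,
             f y <= c * f x & (y == x) || ord y x])].
Proof.
elim/last_ind: s => [|s x IH] //=.
rewrite pairwise_rcons => /andP[/allP hall hp].
have [h1 h2 h3 h4] := IH hp.
rewrite foldl_rcons.
move: h1 h2 h3 h4; set st := foldl _ _ s => h1 h2 h3 h4.
rewrite /gstep; case: ifP => hlt /=.
- split => //.
  + by rewrite -!cats1 subseq_cat2r.
  + by move=> v [<-]; exists x => //; rewrite mem_rcons mem_head.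
  + move=> z; rewrite mem_rcons inE => /orP[/eqP->|hz].
      exists x; rewrite mem_rcons mem_head eqxx; split => //.
      by rewrite -[X in X <= _]mul1r ler_wpM2r.
    have [y [hy1 hy2 hy3]] := h4 z hz.
    by exists y; rewrite mem_rcons inE hy1 orbT.
- move: hlt; rewrite /lt_over; case E: st.2 => [v|] // hlt.
  have [y hy hv] := h3 v E.
  have hc0 : 0 < c by apply: lt_le_trans hc.
  have hyx : f y <= c * f x.
    have : v / c <= f x by rewrite leNgt hlt.
    by rewrite mulrC ler_pdivrMl // hv.
  split => //.
  + exact: subseq_trans h1 (subseq_rcons s x).
  + by move=> v0 [<-]; exists y.
  + move=> z; rewrite mem_rcons inE => /orP[/eqP->|hz]; last exact: h4.
    exists y; split => //; rewrite hall ?orbT //.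
    exact: (mem_subseq h1).
Qed.
End Fold.
Section Tree.
Variables (R : realType) (V E : finType) (src tgt : E -> V) (l : E -> R)
  (r : V) (dem : {set V}) (d : V -> nat) (eps : R).
Hypothesis hl : forall e, 0 <= l e.
Hypothesis heps : 0 < eps.

Local Notation cost := (cost src tgt l r dem d).
Local Notation rent := (rent src tgt l r dem d eps).
Local Notation buy := (buy src tgt l r dem d eps).
Local Notation flow := (flow R src tgt r dem d).

Lemma Mi_gt0 i : 0 < Mi eps i.
Proof. have he := heps; apply: exprn_gt0; lra. Qed.

Lemma Mi_le i j : (i <= j)%N -> Mi eps i <= Mi eps j.
Proof. have he := heps; move=> h; apply: ler_weXn2l => //; lra. Qed.

Lemma Mi_lt i : Mi eps i < Mi eps i.+1.
Proof. have he := heps; rewrite /Mi exprSr; have := Mi_gt0 i; rewrite /Mi; nra. Qed.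

Lemma flow_ge0 T v : 0 <= flow T v.
Proof. exact: ler0n. Qed.

Lemma sum_cond (A : {set V}) (P : V -> bool) (F : V -> R) :
  \sum_(v in A | P v) F v = \sum_v (if (v \in A) && P v then F v else 0).
Proof. by rewrite big_mkcond. Qed.

Lemma cost_split i T : cost (Ai eps i) T = rent i T + Mi eps i * buy i T.
Proof.
rewrite /cost /rent /buy !sum_cond mulr_sumr -big_split /=.
apply: eq_bigr => v _.
case: (v \in T.1) => //=; last by rewrite mulr0 addr0.
case: (v != r) => //=; last by rewrite mulr0 addr0.
rewrite /Ai; case: ltP => h; ring.
Qed.

Lemma E1 i P : cost (Ai eps i.+1) P - cost (Ai eps i) P
   <= (Mi eps i.+1 - Mi eps i) * buy i P.
Proof.
have hab := Mi_lt i.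
rewrite /cost /buy !sum_cond -sumrB mulr_sumr; apply: ler_sum => v _.
case: (v \in P.1) => //=; last by rewrite subrr mulr0.
case: (v != r) => //=; last by rewrite subrr mulr0.
have hx := flow_ge0 P v; have hlv := hl (P.2 v).
rewrite /Ai; case: (ltP (flow P v) (Mi eps i)) => h1;
  case: (ltP (flow P v) (Mi eps i.+1)) => h2; nra.
Qed.

Lemma E2 i Q : (Mi eps i.+1 - Mi eps i) * buy i.+1 Q
   <= cost (Ai eps i.+1) Q - cost (Ai eps i) Q.
Proof.
have hab := Mi_lt i.
rewrite /cost /buy !sum_cond -sumrB mulr_sumr; apply: ler_sum => v _.
case: (v \in Q.1) => //=; last by rewrite subrr mulr0.
case: (v != r) => //=; last by rewrite subrr mulr0.
have hx := flow_ge0 Q v; have hlv := hl (Q.2 v).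
rewrite /Ai; case: (ltP (flow Q v) (Mi eps i)) => h1;
  case: (ltP (flow Q v) (Mi eps i.+1)) => h2; nra.
Qed.

Lemma E3 i Q : cost (Ai eps i) Q <= rent i.+1 Q + Mi eps i * buy i.+1 Q.
Proof.
have hab := Mi_lt i.
rewrite /cost /rent /buy !sum_cond mulr_sumr -big_split; apply: ler_sum => v _.
case: (v \in Q.1) => //=; first last. by rewrite mulr0 addr0.
case: (v != r) => //=; last by rewrite mulr0 addr0.
have hx := flow_ge0 Q v; have hlv := hl (Q.2 v).
rewrite /Ai; case: (ltP (flow Q v) (Mi eps i)) => h1;
  case: (ltP (flow Q v) (Mi eps i.+1)) => h2; nra.
Qed.

Lemma exch i P Q :
  cost (Ai eps i) P <= cost (Ai eps i) Q ->
  cost (Ai eps i.+1) Q <= cost (Ai eps i.+1) P ->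
  buy i.+1 Q <= buy i P /\ rent i P <= rent i.+1 Q.
Proof.
move=> h1 h2.
have e1 := E1 i P; have e2 := E2 i Q; have e3 := E3 i Q; have s := cost_split i P.
have hab := Mi_lt i; have ha := Mi_gt0 i.
have hb : buy i.+1 Q <= buy i P.
  have : (Mi eps i.+1 - Mi eps i) * buy i.+1 Q <= (Mi eps i.+1 - Mi eps i) * buy i P by lra.
  by rewrite ler_pM2l // subr_gt0.
split => //; nra.
Qed.


Lemma natr01 (n : nat) : (n%:R : R) = 0 \/ 1 <= (n%:R : R).
Proof. by case: n => [|n]; [left | right; rewrite ler1n]. Qed.

Lemma Ai_ge0 i x : 0 <= x -> 0 <= Ai eps i x.
Proof. by move=> hx; rewrite /Ai le_min hx ltW // Mi_gt0. Qed.

Lemma cost_ge0 i T : 0 <= cost (Ai eps i) T.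
Proof. by apply: sumr_ge0 => v _; rewrite mulr_ge0 // Ai_ge0 // flow_ge0. Qed.
Lemma rent_ge0 i T : 0 <= rent i T.
Proof. by apply: sumr_ge0 => v _; rewrite mulr_ge0 // Ai_ge0 // flow_ge0. Qed.
Lemma buy_ge0 i T : 0 <= buy i T.
Proof. by apply: sumr_ge0 => v _. Qed.

Lemma split_T k K T S : (k <= K)%N ->
  cost (Ai eps k) T <= Mi eps k * costS src tgt l r dem d (Ai eps 0) T S
     + costS src tgt l r dem d (Ai eps K) T (tree_edges r T :\: S).
Proof.
move=> hk.
have hkK := Mi_le _ _ hk; have hk0 := Mi_gt0 k; have h1k : 1 <= Mi eps k.
  by have := Mi_le 0 k isT; rewrite /Mi expr0.
rewrite /cost /costS !sum_cond mulr_sumr -big_split; apply: ler_sum => v _.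
case hv: (v \in T.1) => //=; last by rewrite mulr0 addr0.
case hr: (v != r) => //=; last by rewrite mulr0 addr0.
have hE : T.2 v \in tree_edges r T by apply: imset_f; rewrite inE hv hr.
rewrite in_setD hE andbT.
have hx := flow_ge0 T v; have hlv := hl (T.2 v).
have hM0 : Mi eps 0 = 1 by rewrite /Mi expr0.
rewrite /Ai hM0.
have hx01 : flow T v = 0 \/ 1 <= flow T v := natr01 _.
move: hx hx01; set x := flow T v => hx hx01.
case: (T.2 v \in S) hE => /= _;
case: (ltP x (Mi eps k)) => h1; case: (ltP x 1) => h2; case: (ltP x (Mi eps K)) => h3;
  case: hx01 => hx01; nra.
Qed.

End Tree.

Section Final.
Variables (R : realType) (V E : finType) (src tgt : E -> V) (l : E -> R)
  (r : V) (dem : {set V}) (d : V -> nat) (eps : R) (K : nat) (T0 : nat -> rtree V E).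
Hypothesis hl : forall e, 0 <= l e.
Hypothesis heps : 0 < eps.

Local Notation cost := (cost src tgt l r dem d).
Local Notation rent := (rent src tgt l r dem d eps).
Local Notation buy := (buy src tgt l r dem d eps).
Local Notation fin := (final src tgt l r dem d eps K T0).
Local Notation fw := (fwd src tgt l r dem d eps T0).
Local Notation bw := (bwd src tgt l r dem d eps K T0).

Lemma fwdS i : fw i.+1 = if cost (Ai eps i.+1) (fw i) < cost (Ai eps i.+1) (T0 i.+1)
                        then fw i else T0 i.+1.
Proof. by []. Qed.

Lemma bwdS n : bw n.+1 = if cost (Ai eps (K - n.+1)) (bw n) < cost (Ai eps (K - n.+1)) (fw (K - n.+1))
                        then bw n else fw (K - n.+1).
Proof. by []. Qed.

Lemma finS i : (i < K)%N -> fin i = if cost (Ai eps i) (fin i.+1) < cost (Ai eps i) (fw i)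
                        then fin i.+1 else fw i.
Proof.
move=> h; rewrite /final.
have E1 : (K - i)%N = (K - i.+1).+1 by rewrite subnSK.
have E2 : (K - (K - i.+1).+1)%N = i by rewrite -E1 subKn // ltnW.
by rewrite E1 bwdS E2.
Qed.

Lemma finK : fin K = fw K.
Proof. by rewrite /final subnn. Qed.

Lemma fw_le i : cost (Ai eps i) (fw i) <= cost (Ai eps i) (T0 i).
Proof.
case: i => [|i]; first exact: lexx.
rewrite fwdS; case: ifP => h; [exact: ltW | exact: lexx].
Qed.

Lemma fwS_le i : cost (Ai eps i.+1) (fw i.+1) <= cost (Ai eps i.+1) (fw i).
Proof.
rewrite fwdS; case: ifP => h; first exact: lexx.
by rewrite leNgt h.
Qed.

Lemma fin_le_fw i : (i <= K)%N -> cost (Ai eps i) (fin i) <= cost (Ai eps i) (fw i).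
Proof.
rewrite leq_eqVlt => /orP[/eqP->|h]; first by rewrite finK lexx.
rewrite (finS _ h); case: ifP => hc; [exact: ltW | exact: lexx].
Qed.

Lemma fin_le_T0 i : (i <= K)%N -> cost (Ai eps i) (fin i) <= cost (Ai eps i) (T0 i).
Proof. by move=> h; apply: le_trans (fin_le_fw _ h) (fw_le i). Qed.

Lemma fin_adj i : (i < K)%N ->
  cost (Ai eps i) (fin i) <= cost (Ai eps i) (fin i.+1) /\
  cost (Ai eps i.+1) (fin i.+1) <= cost (Ai eps i.+1) (fin i).
Proof.
move=> h; have h1 := fin_le_fw _ h; have h2 := fwS_le i.
rewrite (finS _ h); case: ifP => hc; split.
- exact: lexx.
- exact: lexx.
- by rewrite leNgt hc.
- exact: le_trans (fin_le_fw _ h) h2.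
Qed.

Lemma mono j i : (j <= i)%N -> (i <= K)%N ->
  buy i (fin i) <= buy j (fin j) /\ rent j (fin j) <= rent i (fin i).
Proof.
elim: i => [|i IH] hj hi.
  by move: hj; rewrite leqn0 => /eqP->; rewrite !lexx.
move: hj; rewrite leq_eqVlt => /orP[/eqP->|hj]; first by rewrite !lexx.
have [b1 r1] := IH hj (ltnW hi).
have [a1 a2] := fin_adj _ hi.
have [b2 r2] := exch _ _ _ _ _ _ _ _ _ _ hl heps _ _ _ a1 a2.
split; [exact: le_trans b2 b1 | exact: le_trans r1 r2].
Qed.

End Final.

Theorem lemma5 (R : realType) (V E : finType) (src tgt : E -> V) (l : E -> R)
  (r : V) (dem : {set V}) (d : V -> nat)
  (eps gam del lam : R) (K : nat)
  (T0 Topt : nat -> rtree V E) (T : rtree V E) (cB cR : R) :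
  (forall e, 0 <= l e) ->
  (forall v, v \in dem -> (0 < d v)%N) ->
  0 < eps -> 1 < gam -> 1 < del ->
  (K : int) = Kof eps (\sum_(v in dem) d v)%N ->
  (* optimal routing trees T_i^* for A_i *)
  (forall i, (i <= K)%N -> is_routing_tree src tgt r dem (Topt i) /\
     forall T', is_routing_tree src tgt r dem T' ->
       cost src tgt l r dem d (Ai eps i) (Topt i) <= cost src tgt l r dem d (Ai eps i) T') ->
  (* step (1): outputs of a lambda-approximation algorithm *)
  (forall i, (i <= K)%N -> is_routing_tree src tgt r dem (T0 i) /\
     cost src tgt l r dem d (Ai eps i) (T0 i) <= lam * cost src tgt l r dem d (Ai eps i) (Topt i)) ->
  is_routing_tree src tgt r dem T ->
  (forall i, i \in L src tgt l r dem d eps K T0 gam del ->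
     exists S : {set E},
       S \subset tree_edges r T /\
       costS src tgt l r dem d (Ai eps 0) T S
         <= cB * buy src tgt l r dem d eps i (final src tgt l r dem d eps K T0 i) /\
       costS src tgt l r dem d (Ai eps K) T (tree_edges r T :\: S)
         <= cR * rent src tgt l r dem d eps i (final src tgt l r dem d eps K T0 i)) ->
  forall k, (k <= K)%N ->
    cost src tgt l r dem d (Ai eps k) T
      <= Num.max (cB * gam) (cR * del) * lam * cost src tgt l r dem d (Ai eps k) (Topt k).
Proof.
move=> hl _ heps hgam hdel _ hopt happ hT hpart k hk.
set fB := fun i => buy src tgt l r dem d eps i (final src tgt l r dem d eps K T0 i).
set fR := fun i => rent src tgt l r dem d eps i (final src tgt l r dem d eps K T0 i).
have hfB : forall i, 0 <= fB i by move=> i; apply: buy_ge0.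
have hfR : forall i, 0 <= fR i by move=> i; apply: rent_ge0.
have hpi : pairwise ltn (iota 0 K.+1).
  by rewrite -sorted_pairwise ?iota_ltn_sorted //; apply: ltn_trans.
have [hsubB _ _ hB] := fold_inv _ fB _ (ltW hgam) hfB _ _ hpi.
have eLB : LB src tgt l r dem d eps K T0 gam
   = (foldl (gstep _ fB gam) ([::], None) (iota 0 K.+1)).1 by [].
rewrite -eLB in hsubB hB.
have hpL : pairwise (fun a b => ltn b a) (rev (LB src tgt l r dem d eps K T0 gam)).
  exact: pairwise_rev_flip _ _ _ (subseq_pairwise hsubB hpi).
have [hsubL _ _ hL] := fold_inv _ fR _ (ltW hdel) hfR _ _ hpL.
have eL : L src tgt l r dem d eps K T0 gam del
   = (foldl (gstep _ fR del) ([::], None) (rev (LB src tgt l r dem d eps K T0 gam))).1 by [].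
rewrite -eL in hsubL hL.
have hkI : k \in iota 0 K.+1 by rewrite mem_iota add0n ltnS hk.
have [j [hjLB hjB hjk]] := hB k hkI.
have hjk' : (j <= k)%N by case/orP: hjk => [/eqP->|/ltnW].
have hjR : j \in rev (LB src tgt l r dem d eps K T0 gam) by rewrite mem_rev.
have [i [hiL hiR hij]] := hL j hjR.
have hji : (j <= i)%N by case/orP: hij => [/eqP->|/ltnW].
have hiK : (i <= K)%N.
  have : i \in iota 0 K.+1.
    by apply: (mem_subseq hsubB); rewrite -mem_rev; apply: (mem_subseq hsubL).
  by rewrite mem_iota add0n ltnS.
have [mB _] := mono _ _ _ src tgt l r dem d eps K T0 hl heps _ _ hji hiK.
have [_ mR] := mono _ _ _ src tgt l r dem d eps K T0 hl heps _ _ hjk' hk.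
have [S [_ [hS0 hSK]]] := hpart i hiL.
have hsp := split_T _ _ _ src tgt l r dem d eps hl heps _ _ T S hk.
have hcs := cost_split _ _ _ src tgt l r dem d eps k (final src tgt l r dem d eps K T0 k).
have hT0 := fin_le_T0 _ _ _ src tgt l r dem d eps K T0 _ hk.
have [_ hap] := happ k hk.
have [_ hop] := hopt k hk.
have hoT := hop T hT.
have hA0 := cost_ge0 _ _ _ src tgt l r dem d eps hl heps k (Topt k).
have hMk := Mi_gt0 _ eps heps k.
move: hjB hiR mB mR hS0 hSK hsp hcs.
rewrite /fB /fR.
set Bi := buy _ _ _ _ _ _ _ i _; set Bj := buy _ _ _ _ _ _ _ j _; set Bk := buy _ _ _ _ _ _ _ k _.
set Ri := rent _ _ _ _ _ _ _ i _; set Rj := rent _ _ _ _ _ _ _ j _; set Rk := rent _ _ _ _ _ _ _ k _.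
move=> hjB hiR mB mR hS0 hSK hsp hcs.
have hBk : 0 <= Bk by apply: hfB.
have hRk : 0 <= Rk by apply: hfR.
have hBi : 0 <= Bi by apply: hfB.
have hRi : 0 <= Ri by apply: hfR.
have hBiBk : Bi <= gam * Bk by apply: le_trans mB hjB.
have hRiRk : Ri <= del * Rk.
  apply: le_trans hiR _; rewrite ler_wpM2l //; lra.
set m := Num.max (cB * gam) (cR * del).
have hm1 : cB * gam <= m by rewrite le_max lexx.
have hm2 : cR * del <= m by rewrite le_max lexx orbT.
set A := cost _ _ _ _ _ _ _ (Topt k) in hA0 hap hop hoT *.
set CT := cost _ _ _ _ _ _ _ T in hsp hoT *.
have hup : CT <= Mi eps k * (cB * Bi) + cR * Ri.
  apply: le_trans hsp _; apply: lerD => //; rewrite ler_wpM2l // ltW //.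
case: (leP 0 m) => hm.
- have h1 : cB * Bi <= m * Bk.
    case: (leP 0 cB) => hc.
      apply: (le_trans (y := cB * (gam * Bk))); first by rewrite ler_wpM2l.
      by rewrite mulrA ler_wpM2r.
    apply: (le_trans (y := 0)); first by rewrite nmulr_rle0.
    exact: mulr_ge0.
  have h2 : cR * Ri <= m * Rk.
    case: (leP 0 cR) => hc.
      apply: (le_trans (y := cR * (del * Rk))); first by rewrite ler_wpM2l.
      by rewrite mulrA ler_wpM2r.
    apply: (le_trans (y := 0)); first by rewrite nmulr_rle0.
    exact: mulr_ge0.
  have h3 : Mi eps k * (cB * Bi) <= Mi eps k * (m * Bk) by rewrite ler_wpM2l // ltW.
  have h4 : Rk + Mi eps k * Bk <= lam * A.
    by rewrite -hcs; apply: le_trans hT0 hap.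
  have h5 : m * (Rk + Mi eps k * Bk) <= m * (lam * A) by rewrite ler_wpM2l.
  rewrite -mulrA; apply: le_trans hup _; apply: le_trans h5.
  have : Mi eps k * (m * Bk) + m * Rk = m * (Rk + Mi eps k * Bk) by ring.
  lra.
- have hcB : cB < 0.
    have : cB * gam < 0 by apply: le_lt_trans hm1 hm.
    by rewrite pmulr_llt0 //; lra.
  have hcR : cR < 0.
    have : cR * del < 0 by apply: le_lt_trans hm2 hm.
    by rewrite pmulr_llt0 //; lra.
  have h1 : cB * Bi <= 0 by rewrite nmulr_rle0.
  have h2 : cR * Ri <= 0 by rewrite nmulr_rle0.
  have h3 : Mi eps k * (cB * Bi) <= 0 by rewrite pmulr_rle0.
  have hA : A = 0 by lra.
  rewrite hA mulr0; lra.
Qed.
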